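(* Let $f_1:[0,\infty)\to[0,\infty)$ be defined by $f_1(0)=1$, $f_1(1)=0$, and $f_1(t)=t$ for $t\notin\{0,1\}$, and let $\mathbf{A}_1=\{f_1,\mathrm{id}\}$ where $\mathrm{id}$ is the identity map of $[0,\infty)$. Then $\mathbf{A}_1$ is a submonoid of $(\mathbf{F},\circ)$, but there is no subclass $\mathbf{X}$ of the class of all metric spaces with $\mathbf{P}_{\mathbf{X}}=\mathbf{A}_1$.
   Context: All metric spaces are assumed to have nonempty underlying sets. $\mathbf{F}$ is the set of all functions $f:[0,\infty)\to[0,\infty)$, a monoid under composition with identity $\mathrm{id}$. A submonoid is a subset closed under composition and containing $\mathrm{id}$. For a class $\mathbf{X}$ of metric spaces, $\mathbf{P}_{\mathbf{X}}$ denotes the set of all $f\in\mathbf{F}$ such that for every metric space $(X,d)$, if $(X,d)\in\mathbf{X}$ then $(X,f\circ d)\in\mathbf{X}$ (where $f\circ d(x,y)=f(d(x,y))$; membership requires $f\circ d$ to be a metric). *)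

(* Defs.v *)
From Stdlib Require Import Reals Lra.
Open Scope R_scope.

Definition nnR : Type := {x : R | 0 <= x}.
Definition val (x : nnR) : R := proj1_sig x.

Definition FF : Type := nnR -> nnR.
Definition idF : FF := fun t => t.
Definition compF (f g : FF) : FF := fun t => f (g t).

Definition submonoid (A : FF -> Prop) : Prop :=
  A idF /\ forall f g, A f -> A g -> A (compF f g).

Definition is_metric (T : Type) (d : T -> T -> nnR) : Prop :=
  inhabited T /\
  (forall x y, val (d x y) = 0 <-> x = y) /\
  (forall x y, d x y = d y x) /\
  (forall x y z, val (d x z) <= val (d x y) + val (d y z)).

(* A class of metric spaces: a predicate on pairs (T, d), all of whose
   members are metric spaces. *)
Definition MClass : Type := forall T : Type, (T -> T -> nnR) -> Prop.

Definition class_of_metric_spaces (X : MClass) : Prop :=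
  forall T d, X T d -> is_metric T d.

Definition PX (X : MClass) (f : FF) : Prop :=
  forall T (d : T -> T -> nnR), X T d -> X T (fun x y => f (d x y)).

Definition f1R (t : R) : R :=
  if Req_EM_T t 0 then 1 else if Req_EM_T t 1 then 0 else t.

Lemma f1R_nonneg (t : R) : 0 <= t -> 0 <= f1R t.
Proof.
  intro H; unfold f1R.
  destruct (Req_EM_T t 0); [lra|]. destruct (Req_EM_T t 1); lra.
Qed.

Definition f_1 : FF := fun t => exist _ (f1R (val t)) (f1R_nonneg (val t) (proj2_sig t)).

Definition A_1 (f : FF) : Prop := f = f_1 \/ f = idF.

(* Main.v *)
Require Import Defs.
From Stdlib Require Import Reals Lra ProofIrrelevance FunctionalExtensionality.
Open Scope R_scope.

Lemma f1R_0 : f1R 0 = 1.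
Proof. unfold f1R. destruct (Req_EM_T 0 0); lra. Qed.

Lemma f1R_1 : f1R 1 = 0.
Proof. unfold f1R. destruct (Req_EM_T 1 0); [lra|]. destruct (Req_EM_T 1 1); lra. Qed.

Lemma f1R_inv t : f1R (f1R t) = t.
Proof.
  unfold f1R at 2. destruct (Req_EM_T t 0) as [->|H0].
  - apply f1R_1.
  - destruct (Req_EM_T t 1) as [->|H1].
    + apply f1R_0.
    + unfold f1R. destruct (Req_EM_T t 0); [lra|]. destruct (Req_EM_T t 1); lra.
Qed.

Lemma nnR_eq (a b : nnR) : val a = val b -> a = b.
Proof.
  destruct a as [a Ha], b as [b Hb]; unfold val; simpl; intros ->.
  f_equal; apply proof_irrelevance.
Qed.

Definition zeroF : FF := fun _ => exist _ 0 (Rle_refl 0).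
Definition oneN : nnR := exist _ 1 Rle_0_1.
Definition zeroN : nnR := exist _ 0 (Rle_refl 0).

Theorem mainTheorem7 :
  submonoid A_1 /\
  ~ (exists X : MClass, class_of_metric_spaces X /\ forall f : FF, PX X f <-> A_1 f).
Proof.
  split.
  - split; [right; reflexivity|].
    intros f g [->| ->] [->| ->]; unfold A_1.
    + right. apply functional_extensionality; intro t. apply nnR_eq.
      unfold compF, f_1, idF, val; simpl. apply f1R_inv.
    + left; reflexivity.
    + left; reflexivity.
    + right; reflexivity.
  - intros [X [HX HP]].
    assert (Hempty : forall T d, ~ X T d).
    { intros T d Hd.
      assert (Hf : PX X f_1) by (apply HP; left; reflexivity).
      destruct (HX _ _ (Hf T d Hd)) as [[x] [Hm _]].
      destruct (HX _ _ Hd) as [_ [Hm' _]].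
      assert (E : val (d x x) = 0) by (apply Hm'; reflexivity).
      assert (E2 := proj2 (Hm x x) eq_refl).
      unfold f_1, val in E2; simpl in E2. unfold val in E. rewrite E, f1R_0 in E2. lra. }
    assert (Hz : A_1 zeroF) by (apply HP; intros T d Hd; exfalso; exact (Hempty T d Hd)).
    destruct Hz as [Hz|Hz].
    + assert (E := f_equal (fun f => val (f zeroN)) Hz). simpl in E.
      unfold f_1, val in E; simpl in E. rewrite f1R_0 in E. lra.
    + assert (E := f_equal (fun f => val (f oneN)) Hz). simpl in E.
      unfold idF, val in E; simpl in E. lra.
Qed.
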